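(* Let $\mathcal{U}$ be a UEC-representative and let $\mathcal{D}$ be a maximal DAG in the UEC of $\mathcal{U}$. Then for nodes $v,x,w$, the path $(v,x,w)$ is a v-structure $v\to x\leftarrow w$ in $\mathcal{D}$ if and only if there exist cliques $C_1,C_2\in\mathcal{E}^\mathcal{U}$ with $v,x\in C_1$, $w\notin C_1$, $w,x\in C_2$, $v\notin C_2$, and every clique in $\mathcal{E}^\mathcal{U}$ containing $v$ or $w$ also contains $x$.
   Context: For a DAG $\mathcal{D}$, a trek is a path with no repeated vertices and no collider; the unconditional dependence graph $\mathcal{U}^\mathcal{D}$ has an edge between distinct $v,w$ iff there is a trek between them. A UEC-representative is an undirected graph $\mathcal{U}$ with $\mathcal{U}=\mathcal{U}^\mathcal{D}$ for some DAG $\mathcal{D}$ on the same vertex set; the UEC of $\mathcal{U}$ is $\{\mathcal{D}:\mathcal{U}^\mathcal{D}=\mathcal{U}\}$. A DAG $\mathcal{D}$ in this UEC is maximal if every DAG obtained from $\mathcal{D}$ by adding one edge is not in the UEC. An edge clique cover is a collection of cliques covering every vertex and edge; $\mathcal{E}^\mathcal{U}$ denotes the unique minimum-cardinality edge clique cover of the UEC-representative $\mathcal{U}$ (it equals $\{\mathrm{ne}_\mathcal{U}[m]:m\in M\}$ for any maximum independent set $M$, with $\mathrm{ne}_\mathcal{U}[m]$ the closed neighborhood). A v-structure is $v\to x\leftarrow w$ with $v,w$ nonadjacent. *)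

(* Defs.v *)
From mathcomp Require Import all_boot.
Set Implicit Arguments. Unset Strict Implicit. Unset Printing Implicit Defensive.

Section Graphs.
Variable T : finType.

(* A directed graph on T is d : rel T, with d x y meaning x -> y.
   An undirected graph is U : rel T (U x y means x - y). *)

Definition acyclic (d : rel T) : Prop :=
  forall x y : T, d x y -> ~~ connect d y x.

Definition adjD (d : rel T) : rel T := fun x y => d x y || d y x.

Fixpoint nocollider (d : rel T) (s : seq T) : bool :=
  match s with
  | a :: ((b :: c :: _) as t) => ~~ (d a b && d c b) && nocollider d t
  | _ => true
  end.

Definition is_trek (d : rel T) (v w : T) (s : seq T) : Prop :=
  [/\ path (adjD d) v s, last v s = w, uniq (v :: s) & nocollider d (v :: s)].

Definition inUEC (U : rel T) (d : rel T) : Prop :=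
  acyclic d /\
  forall v w : T, U v w <-> (v != w /\ exists s, is_trek d v w s).

Definition UEC_rep (U : rel T) : Prop := exists d, inUEC U d.

Definition add_edge (d : rel T) (a b : T) : rel T :=
  fun x y => d x y || ((x == a) && (y == b)).

Definition maximal_in_UEC (U : rel T) (d : rel T) : Prop :=
  inUEC U d /\
  forall a b : T, a != b -> ~~ d a b -> ~ inUEC U (add_edge d a b).

Definition is_clique (U : rel T) (C : {set T}) : Prop :=
  forall x y, x \in C -> y \in C -> x != y -> U x y.

Definition edge_clique_cover (U : rel T) (E : {set {set T}}) : Prop :=
  [/\ forall C, C \in E -> is_clique U C,
      forall x : T, exists2 C, C \in E & x \in C
    & forall x y : T, U x y -> exists2 C, C \in E & (x \in C) && (y \in C)].

(* E is a minimum-cardinality edge clique cover of U (for a UEC-representative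
   this is unique: it is E^U) *)
Definition min_edge_clique_cover (U : rel T) (E : {set {set T}}) : Prop :=
  edge_clique_cover U E /\
  forall E' : {set {set T}}, edge_clique_cover U E' -> #|E| <= #|E'|.

Definition v_structure (d : rel T) (v x w : T) : Prop :=
  [/\ v != w, d v x, d w x & ~~ adjD d v w].

End Graphs.

(* Main.v *)
Require Import Defs.
From mathcomp Require Import all_boot.
Set Implicit Arguments. Unset Strict Implicit. Unset Printing Implicit Defensive.

Definition anc (T : finType) (d : rel T) v w := exists t, connect d t v && connect d t w.
Definition srcs (T : finType) (d : rel T) := [set s | [forall y, ~~ d y s]].
Definition de (T : finType) (d : rel T) s := [set y | connect d s y].

Lemma nc_tail (T : finType) (d : rel T) v s : nocollider d (v :: s) -> nocollider d s.
Proof. by case: s => [|a [|b s]] //= /andP[]. Qed.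

Lemma fwd_conn (T : finType) (d : rel T) : forall s v, path (adjD d) v s ->
  nocollider d (v :: s) -> (if s is a :: _ then d v a else true) ->
  connect d v (last v s).
Proof.
elim=> [|a s IH] v; first by rewrite connect0.
rewrite [path _ _ _]/= => /andP[_ Hp] Hnc Hva.
apply: connect_trans (connect1 Hva) _.
apply: IH => //; first exact: nc_tail Hnc.
case: s Hp Hnc => [|b s] //= /andP[Hab _] /andP[Hn _].
move: Hab; rewrite /adjD; case/orP=> // Hba.
by move: Hn; rewrite Hva Hba.
Qed.

Lemma nc_anc (T : finType) (d : rel T) : forall s v, path (adjD d) v s ->
  nocollider d (v :: s) -> anc d v (last v s).
Proof.
elim=> [|a s IH] v; first by move=> _ _; exists v; rewrite connect0.
rewrite [path _ _ _]/= => /andP[Hva Hp] Hnc.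
case: (boolP (d v a)) => Hda.
  exists v; rewrite connect0 /=.
  by apply: (@fwd_conn _ _ (a :: s)) => //=; rewrite Hva.
have Hav : d a v by move: Hva; rewrite /adjD (negbTE Hda).
have [t /andP[Hta Htl]] := IH a Hp (nc_tail Hnc).
by exists t; rewrite Htl (connect_trans Hta (connect1 Hav)).
Qed.

Lemma trek_anc (T : finType) (d : rel T) v w s : is_trek d v w s -> anc d v w.
Proof. by case=> Hp Hl _ Hnc; rewrite -Hl; apply: nc_anc. Qed.

Lemma prepend (T : finType) (d : rel T) u z s : acyclic d -> d u z ->
  nocollider d (u :: s) -> nocollider d (z :: u :: s).
Proof.
move=> Hac Huz; case: s => [|c s] // Hnc.
change (~~ (d z u && d c u) && nocollider d [:: u, c & s]).
rewrite Hnc andbT; apply/negP=> /andP[Hzu _].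
by move/negP: (Hac _ _ Huz); apply; apply: connect1.
Qed.

Lemma fwd_nc (T : finType) (d : rel T) : acyclic d -> forall s t, path d t s ->
  nocollider d (t :: s).
Proof.
move=> Hac; elim=> [|a s IH] t //.
rewrite [path _ _ _]/= => /andP[Hta Hp].
case: s IH Hp => [|b s] IH Hp //.
change (~~ (d t a && d b a) && nocollider d [:: a, b & s]).
rewrite (IH a Hp) andbT; apply/negP=> /andP[_ Hba].
case/andP: Hp => Hab _.
by move/negP: (Hac _ _ Hab); apply; apply: connect1.
Qed.

Lemma ext (T : finType) (d : rel T) : acyclic d -> forall q u s, path d u q ->
  path (adjD d) u s -> nocollider d (u :: s) -> uniq (u :: s) -> uniq (u :: q) ->
  (forall y, y \in q -> y \notin u :: s) ->
  exists s', is_trek d (last u q) (last u s) s'.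
Proof.
move=> Hac; elim=> [|z q IH] u s Hq Hp Hnc Hu Huq Hdis /=; first by exists s.
case/andP: Hq => Huz Hq.
have := IH z (u :: s) Hq; rewrite [last z (u :: s)]/=; apply.
- by rewrite [path _ _ _]/= Hp andbT /adjD Huz orbT.
- exact: prepend.
- by rewrite cons_uniq Hu Hdis // mem_head.
- by case/andP: Huq.
- move=> y Hy; rewrite in_cons negb_or Hdis ?andbT ?in_cons ?Hy ?orbT //.
  case/andP: Huq => _ /andP[Hzq _].
  by apply/eqP=> Hyz; move: Hzq; rewrite -Hyz Hy.
Qed.

Lemma lastanc (T : finType) (d : rel T) v : forall r t, path d t r -> uniq (t :: r) ->
  connect d t v -> exists t', exists r', [/\ path d t' r', uniq (t' :: r'),
  last t' r' = last t r, connect d t' v & all (fun y => ~~ connect d y v) r'].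
Proof.
elim=> [|a r IH] t Hp Hu Htv; first by exists t, [::].
case: (boolP (has (fun y => connect d y v) (a :: r))) => Hh.
  have Hav : connect d a v.
    case/hasP: Hh => y Hy Hyv; case/andP: Hp => _ Hp.
    exact: connect_trans (path_connect Hp Hy) Hyv.
  case/andP: Hp => _ Hp; case/andP: Hu => _ Hu.
  have [t' [r' [H1 H2 H3 H4 H5]]] := IH a Hp Hu Hav.
  by exists t', r'; split.
exists t, (a :: r); split => //.
by apply/allP => y Hy; move/hasPn: Hh; apply.
Qed.

Lemma path_conn_last (T : finType) (d : rel T) u q y : path d u q -> y \in q ->
  connect d y (last u q).
Proof.
move=> Hp Hy; case/splitPr: q / Hy Hp => q1 q2.
rewrite cat_path last_cat => /andP[_ /andP[_ Hq2]] /=.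
by apply/connectP; exists q2.
Qed.

Lemma anc_trek (T : finType) (d : rel T) v w : acyclic d -> anc d v w ->
  exists s, is_trek d v w s.
Proof.
move=> Hac [t /andP[Htv /connectP[r0 Hr0 ->]]].
case/shortenP: Hr0 => r Hr Hur _.
have [t' [r' [H1 H2 H3 H4 H5]]] := lastanc Hr Hur Htv.
move/connectP: H4 => [q0 Hq0 Hv]; move: Hq0 Hv.
case/shortenP => q Hq Huq _ Hv.
rewrite -H3.
have -> : v = last t' q by [].
apply: ext => //.
- by apply: sub_path H1 => x y H; rewrite /adjD H.
- exact: fwd_nc H1.
- move=> y Hy; rewrite in_cons negb_or; apply/andP; split.
    by apply/eqP=> E; case/andP: Huq; rewrite -E Hy.
  apply/negP=> Hyr; move/allP: H5 => /(_ y Hyr); rewrite Hv.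
  by rewrite (path_conn_last Hq Hy).
Qed.

Lemma UEC_anc (T : finType) (U d : rel T) : inUEC U d -> forall v w,
  U v w <-> v != w /\ anc d v w.
Proof.
case=> Hac H v w; split.
  by case/H=> Hne [s Hs]; split => //; apply: trek_anc Hs.
by case=> Hne Ha; apply/H; split => //; apply: anc_trek.
Qed.

Lemma anc_UEC (T : finType) (U d : rel T) : acyclic d ->
  (forall v w, U v w <-> v != w /\ anc d v w) -> inUEC U d.
Proof.
move=> Hac H; split => // v w; split.
  by case/H=> Hne Ha; split => //; apply: anc_trek.
by case=> Hne [s Hs]; apply/H; split => //; apply: trek_anc Hs.
Qed.

Lemma conn_acyc (T : finType) (d : rel T) x y : acyclic d ->
  connect d x y -> connect d y x -> x = y.
Proof.
move=> Hac /connectP[[|z p] /= Hp ->] // Hyx.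
case/andP: Hp => Hxz Hp.
have Hzy : connect d z (last z p) by apply/connectP; exists p.
by move/negP: (Hac _ _ Hxz); case; apply: connect_trans Hzy Hyx.
Qed.

Lemma src_conn (T : finType) (d : rel T) s t : s \in srcs d -> connect d t s -> t = s.
Proof.
rewrite inE => /forallP Hs /connectP[p Hp Hl].
move: Hp Hl; case/lastP: p => [|p z] //.
rewrite rcons_path last_rcons => /andP[_ H] Hsz.
by move: (Hs (last t p)); rewrite Hsz H.
Qed.

Lemma src_exists (T : finType) (d : rel T) : acyclic d -> forall x,
  exists2 s, s \in srcs d & connect d s x.
Proof.
move=> Hac.
suff H : forall n x, #|[set y | connect d y x]| < n -> exists2 s, s \in srcs d & connect d s x.
  by move=> x; apply: (H _ x (ltnSn _)).
elim=> [|n IH] x // Hn.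
case: (boolP (x \in srcs d)) => Hx; first by exists x; rewrite ?connect0.
move: Hx; rewrite inE => /forallPn [y]; rewrite negbK => Hyx.
have Hlt : #|[set z | connect d z y]| < #|[set z | connect d z x]|.
  apply: proper_card; apply/properP; split.
    apply/subsetP => z; rewrite !inE => Hz; exact: connect_trans Hz (connect1 Hyx).
  exists x; rewrite !inE ?connect0 //.
  by apply/negP => Hxy; move/negP: (Hac _ _ Hyx).
have [s Hs Hsy] := IH y (leq_trans Hlt Hn).
by exists s => //; apply: connect_trans Hsy (connect1 Hyx).
Qed.

Lemma cover_facts (T : finType) (U d : rel T) E : inUEC U d ->
  min_edge_clique_cover U E ->
  (forall C, C \in E -> exists2 s, s \in srcs d & C = de d s) /\
  (forall s, s \in srcs d -> de d s \in E).
Proof.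
move=> HU [[Hcl Hcv He] Hmin].
have Hac := HU.1. have HUa := UEC_anc HU.
set S := srcs d.
have Hsrcadj : forall s1 s2, s1 \in S -> s2 \in S -> U s1 s2 -> False.
  move=> s1 s2 H1 H2 /HUa [Hne [t /andP[h1 h2]]].
  move: Hne; rewrite -(src_conn H1 h1) -(src_conn H2 h2); by rewrite eqxx.
have Hde : forall s y, s \in S -> s != y -> connect d s y -> U s y.
  by move=> s y Hs Hne Hsy; apply/HUa; split => //; exists s; rewrite connect0.
have Hcov' : edge_clique_cover U [set de d s | s in S].
  split.
  - move=> C /imsetP[s Hs ->] x y; rewrite !inE => Hx Hy Hxy.
    by apply/HUa; split => //; exists s; rewrite Hx Hy.
  - move=> x; have [s Hs Hsx] := src_exists Hac x.
    by exists (de d s); [apply: imset_f | rewrite inE].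
  - move=> x y /HUa [_ [t /andP[Htx Hty]]].
    have [s Hs Hst] := src_exists Hac t.
    exists (de d s); first exact: imset_f.
    by rewrite !inE (connect_trans Hst Htx) (connect_trans Hst Hty).
have Hle : #|E| <= #|S| by apply: leq_trans (Hmin _ Hcov') (leq_imset_card _ _).
pose h s := odflt set0 [pick C in E | s \in C].
have Hh : forall s, h s \in E /\ s \in h s.
  move=> s; rewrite /h; case: pickP => [C /andP[HC Hs]|Hn] //=.
  have [C HC Hs] := Hcv s.
  by move: (Hn C); rewrite /= HC Hs.
have Hhinj : {in S &, injective h}.
  move=> s1 s2 H1 H2 Heq; apply/eqP; apply/negPn/negP => Hne.
  apply: (Hsrcadj s1 s2 H1 H2).
  apply: (Hcl (h s1) (Hh s1).1 s1 s2 (Hh s1).2 _ Hne).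
  by rewrite Heq (Hh s2).2.
have HhE : h @: S = E.
  apply/eqP; rewrite eqEcard; apply/andP; split.
    by apply/subsetP => C /imsetP[s _ ->]; exact: (Hh s).1.
  by rewrite card_in_imset.
have Hsub : forall s, s \in S -> h s \subset de d s.
  move=> s Hs; apply/subsetP => y Hy; rewrite inE.
  case: (eqVneq s y) => [<-|Hne]; first exact: connect0.
  have := Hcl _ (Hh s).1 s y (Hh s).2 Hy Hne.
  move/HUa => [_ [t /andP[Hts Hty]]].
  by rewrite -(src_conn Hs Hts).
have Hsup : forall s, s \in S -> de d s \subset h s.
  move=> s Hs; apply/subsetP => y; rewrite inE => Hsy.
  case: (eqVneq s y) => [<-|Hne]; first exact: (Hh s).2.
  have [C HC /andP[HsC HyC]] := He s y (Hde s y Hs Hne Hsy).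
  move: HC; rewrite -HhE => /imsetP[s' Hs' HCe]; subst C.
  have : s \in de d s' by apply: (subsetP (Hsub s' Hs')).
  rewrite inE => Hs's.
  by have := src_conn Hs Hs's => Heq; subst s'.
have Hheq : forall s, s \in S -> h s = de d s.
  by move=> s Hs; apply/eqP; rewrite eqEsubset Hsub ?Hsup.
split.
- move=> C; rewrite -HhE => /imsetP[s Hs ->]; exists s => //; exact: Hheq.
- by move=> s Hs; rewrite -Hheq //; exact: (Hh s).1.
Qed.

Lemma addOK (T : finType) (U d : rel T) a b : inUEC U d -> ~~ connect d b a ->
  (forall s, s \in srcs d -> connect d s a -> connect d s b) ->
  inUEC U (add_edge d a b).
Proof.
move=> HU Hba Hsrc. have Hac := HU.1.
set d' := add_edge d a b.
have Hcs : forall x y, connect d x y -> connect d' x y.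
  apply: connect_sub => x y H; apply: connect1; by rewrite /d' /add_edge H.
have HR : forall x y, connect d' x y -> connect d x y || (connect d x a && connect d b y).
  move=> x y /connectP[p Hp ->].
  elim: p x Hp => [|z p IH] x; first by rewrite /= connect0.
  rewrite [path _ _ _]/= => /andP[Hxz /IH].
  rewrite [last _ _]/=.
  rewrite /d' /add_edge in Hxz; case/orP: Hxz => [Hxz|/andP[/eqP-> /eqP->]].
  - case/orP => [H|/andP[H1 H2]].
      by rewrite (connect_trans (connect1 Hxz) H).
    by rewrite (connect_trans (connect1 Hxz) H1) H2 orbT.
  - case/orP => [H|/andP[H1 H2]]; by rewrite connect0 ?H ?H2 orbT.
apply: anc_UEC.
- move=> x y Hxy; apply/negP => /HR.
  rewrite /d' /add_edge in Hxy; case/orP: Hxy => [Hxy|/andP[/eqP-> /eqP->]].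
  + case/orP => [H|/andP[Hya Hbx]]; first by move/negP: (Hac _ _ Hxy).
    move/negP: Hba; apply.
    exact: connect_trans Hbx (connect_trans (connect1 Hxy) Hya).
  + by case/orP => [H|/andP[H _]]; move/negP: Hba.
- move=> v w; split.
  + case/(UEC_anc HU) => Hne [t /andP[h1 h2]]; split => //.
    by exists t; rewrite !Hcs.
  + case=> Hne [t /andP[h1 h2]]; apply/(UEC_anc HU); split => //.
    have [s Hs Hst] := src_exists Hac t.
    have Hy : forall y, connect d' t y -> connect d s y.
      move=> y /HR /orP[H|/andP[H1 H2]]; first exact: connect_trans Hst H.
      exact: connect_trans (Hsrc s Hs (connect_trans Hst H1)) H2.
    by exists s; rewrite !Hy.
Qed.

Theorem lemma5p1 (T : finType) (U d : rel T) (E : {set {set T}}) :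
  UEC_rep U ->
  maximal_in_UEC U d ->
  min_edge_clique_cover U E ->
  forall v x w : T,
    v_structure d v x w <->
    ((exists C1, exists C2,
        [/\ C1 \in E, C2 \in E,
            [/\ v \in C1, x \in C1 & w \notin C1]
          & [/\ w \in C2, x \in C2 & v \notin C2]])
     /\ (forall C, C \in E -> (v \in C) || (w \in C) -> x \in C)).
Proof.
move=> _ [HU Hmax] HE v x w.
have Hac := HU.1.
have [HC1 HC2] := cover_facts HU HE.
have Hnot : forall a b, a != b -> ~~ d a b -> ~~ connect d b a ->
    (forall s, s \in srcs d -> connect d s a -> connect d s b) -> False.
  by move=> a b H1 H2 H3 H4; apply: (Hmax a b H1 H2 (addOK HU H3 H4)).
split.
- case=> Hvw Hvx Hwx Hadj.
  have Hsep : forall a b, a != b -> ~~ adjD d a b ->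
      exists2 s, s \in srcs d & connect d s a && ~~ connect d s b.
    move=> a b Hab Hadj'.
    case: (boolP [exists s, (s \in srcs d) && connect d s a && ~~ connect d s b]).
      by case/existsP => s /andP[/andP[H1 H2] H3]; exists s; rewrite ?H2.
    move=> Hn; exfalso.
    have Hall : forall s, s \in srcs d -> connect d s a -> connect d s b.
      move=> s Hs Hsa; apply/negPn/negP => Hsb; move/negP: Hn; apply.
      by apply/existsP; exists s; rewrite Hs Hsa Hsb.
    move: Hadj'; rewrite /adjD negb_or => /andP[Hnab Hnba].
    case: (boolP (connect d b a)) => Hcba.
      apply: (Hnot b a) => //; first by rewrite eq_sym.
        apply/negP => Hcab; move/eqP: Hab; apply; exact: conn_acyc Hcab Hcba.
      by move=> s _ Hsb; apply: connect_trans Hsb Hcba.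
    exact: (Hnot a b).
  have [s1 Hs1 /andP[Hs1v Hs1w]] := Hsep v w Hvw Hadj.
  have Hwv : w != v by rewrite eq_sym.
  have Hadj2 : ~~ adjD d w v by move: Hadj; rewrite /adjD orbC.
  have [s2 Hs2 /andP[Hs2w Hs2v]] := Hsep w v Hwv Hadj2.
  split.
  + exists (de d s1), (de d s2); split; try by apply: HC2.
      by rewrite !inE Hs1v Hs1w (connect_trans Hs1v (connect1 Hvx)).
    by rewrite !inE Hs2v Hs2w (connect_trans Hs2w (connect1 Hwx)).
  + move=> C /HC1 [s Hs ->]; rewrite !inE => /orP[H|H].
      exact: connect_trans H (connect1 Hvx).
    exact: connect_trans H (connect1 Hwx).
- case=> [[C1 [C2 [HC1E HC2E [Hv1 Hx1 Hw1] [Hw2 Hx2 Hv2]]]] Hall].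
  move: HC1E HC2E => /HC1 [s1 Hs1 E1] /HC1 [s2 Hs2 E2]; subst C1 C2.
  move: Hv1 Hx1 Hw1 Hw2 Hx2 Hv2; rewrite !inE => Hv1 Hx1 Hw1 Hw2 Hx2 Hv2.
  have Hall' : forall s, s \in srcs d -> connect d s v || connect d s w ->
      connect d s x.
    by move=> s Hs H; have := Hall _ (HC2 s Hs); rewrite !inE; apply.
  have Hedge : forall a s, s \in srcs d -> connect d s x -> ~~ connect d s a ->
      (forall s, s \in srcs d -> connect d s a -> connect d s x) -> d a x.
    move=> a s Hs Hsx Hsa Hax; apply/negPn/negP => Hnax.
    apply: (Hnot a x) => //.
      by apply/eqP => Eax; move: Hsa; rewrite Eax Hsx.
    by apply/negP => Hxa; move: Hsa; rewrite (connect_trans Hsx Hxa).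
  have Hvx : d v x.
    by apply: (Hedge v s2) => // s Hs H; apply: Hall' => //; rewrite H.
  have Hwx : d w x.
    by apply: (Hedge w s1) => // s Hs H; apply: Hall' => //; rewrite H orbT.
  split => //.
  + by apply/eqP => Evw; move: Hw1; rewrite -Evw Hv1.
  + rewrite /adjD negb_or; apply/andP; split; apply/negP => H.
      by move: Hw1; rewrite (connect_trans Hv1 (connect1 H)).
    by move: Hv2; rewrite (connect_trans Hw2 (connect1 H)).
Qed.
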